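(* For $\alpha\in\mathbb{R}\setminus\{0\}$ let $$P_{-2}=\frac{uz}{2},\quad P_{-1}=\frac{u-y-2\alpha(yu+uz-y)}{2\alpha},\quad P_0=\frac{u(\alpha x+4\alpha y+\alpha z-2)+2(\alpha-2\alpha y+y)}{2\alpha},$$ $$P_1=\frac{u-y-2\alpha(xu+yu-y)}{2\alpha},\quad P_2=\frac{xu}{2},$$ and let $\gamma_\alpha=\sup\{\delta\ge0:\ P_i(x,y,z,u)\ge0\ \text{for all } -2\le i\le2 \text{ and all }(x,y,z,u)\in[0,\delta]^4\}$. Then $\gamma_\alpha=\frac12$ for $\alpha\in[\frac12,1]$, and $\gamma_\alpha<\frac12$ for $0\ne\alpha<\frac12$ and for $\alpha>1$.
   Context: These are the positivity polynomials of the two-stage second-order explicit Runge--Kutta method with $a_{21}=\alpha$, $b=(1-\frac1{2\alpha},\frac1{2\alpha})$, applied to the semi-discretized heat equation $u_k'=q_k\,(u_{k-1}-2u_k+u_{k+1})/(\Delta x)^2$ with periodic indices and $q_k\ge0$: one step gives $u^{n+1}_k=\sum_{i=-2}^2P_iu^n_{k-i}$, where $x=\xi^1_{k-1}$, $y=\xi^1_k$, $z=\xi^1_{k+1}$, $u=\xi^2_k$ and $\xi^j_\ell=\Delta t\,q_\ell/(\Delta x)^2$ are treated as independent variables. *)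

(* Defs.v *)
From HB Require Import structures.
From mathcomp Require Import all_boot all_order all_algebra.
From mathcomp Require Import boolp classical_sets reals.
Set Implicit Arguments. Unset Strict Implicit. Unset Printing Implicit Defensive.
Import Order.TTheory GRing.Theory Num.Theory.
Local Open Scope ring_scope.
Local Open Scope classical_set_scope.

Section Defs.
Variable R : realType.

Definition Pm2 (a x y z u : R) : R := u * z / 2.
Definition Pm1 (a x y z u : R) : R :=
  (u - y - 2 * a * (y * u + u * z - y)) / (2 * a).
Definition P0 (a x y z u : R) : R :=
  (u * (a * x + 4 * a * y + a * z - 2) + 2 * (a - 2 * a * y + y)) / (2 * a).
Definition P1 (a x y z u : R) : R :=
  (u - y - 2 * a * (x * u + y * u - y)) / (2 * a).
Definition P2 (a x y z u : R) : R := x * u / 2.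

Definition all_P_nonneg (a x y z u : R) : Prop :=
  [/\ 0 <= Pm2 a x y z u, 0 <= Pm1 a x y z u, 0 <= P0 a x y z u,
      0 <= P1 a x y z u & 0 <= P2 a x y z u].

Definition good_deltas (a : R) : set R :=
  [set d | 0 <= d /\
     forall x y z u : R, 0 <= x <= d -> 0 <= y <= d -> 0 <= z <= d ->
       0 <= u <= d -> all_P_nonneg a x y z u].

Definition gamma (a : R) : R := sup (good_deltas a).
End Defs.

(* Main.v *)
Require Import Defs.
From HB Require Import structures.
From mathcomp Require Import all_boot all_order all_algebra.
From mathcomp Require Import boolp classical_sets reals.
From mathcomp Require Import ring lra.
Import Order.TTheory GRing.Theory Num.Theory.
Local Open Scope ring_scope.

Section Aux.
Variable R : realType.

Lemma zero_good (a : R) : a != 0 -> good_deltas a 0.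
Proof.
move=> a0; split => // x y z u.
move=> /andP[x0 x1] /andP[y0 y1] /andP[z0 z1] /andP[u0 u1].
have -> : x = 0 by apply/eqP; rewrite eq_le x1 x0.
have -> : y = 0 by apply/eqP; rewrite eq_le y1 y0.
have -> : z = 0 by apply/eqP; rewrite eq_le z1 z0.
have -> : u = 0 by apply/eqP; rewrite eq_le u1 u0.
rewrite /all_P_nonneg /Pm2 /Pm1 /P0 /P1 /P2.
have -> : (0 * (a * 0 + 4 * a * 0 + a * 0 - 2) + 2 * (a - 2 * a * 0 + 0)) / (2 * a) = 1 :> R.
  by field.
split; rewrite ?mul0r ?mulr0 ?subrr ?oppr0 ?addr0 ?mul0r ?ler01.
all: by rewrite ?mulr0 ?subrr ?mul0r.
Qed.

Lemma Pm1_neg (a d : R) : a != 0 ->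
  (forall x y z u, 0 <= x <= d -> 0 <= y <= d -> 0 <= z <= d ->
     0 <= u <= d -> 0 <= Pm1 a x y z u) ->
  0 <= d -> d <= 2^-1.
Proof.
move=> a0 H d0; rewrite leNgt; apply/negP => hd.
have := H 0 d d d.
rewrite !lexx d0 /= => /(_ isT isT isT isT).
have -> : Pm1 a 0 d d d = d * (1 - 2 * d) by rewrite /Pm1; field.
rewrite pmulr_rge0; last by lra.
lra.
Qed.


Lemma half_good (a : R) : 2^-1 <= a <= 1 -> good_deltas a 2^-1.
Proof.
move=> /andP[a1 a2]; split; first lra.
move=> x y z u /andP[x0 x1] /andP[y0 y1] /andP[z0 z1] /andP[u0 u1].
have a0 : 0 < 2 * a by lra.
have g1 : forall w, 0 <= w <= 2^-1 -> 0 <= 2 * (u * (a * (2^-1 - w) + (1 - a) * (2^-1 - y)))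
         + y * (2 * a - 1) * (1 - 2 * u).
  move=> w /andP[w0 w1].
  have h1 : 0 <= a * (2^-1 - w) by apply: mulr_ge0; lra.
  have h2 : 0 <= (1 - a) * (2^-1 - y) by apply: mulr_ge0; lra.
  have h3 : 0 <= u * (a * (2^-1 - w) + (1 - a) * (2^-1 - y)) by apply: mulr_ge0; lra.
  have h4 : 0 <= y * (2 * a - 1) by apply: mulr_ge0; lra.
  have h5 : 0 <= y * (2 * a - 1) * (1 - 2 * u) by apply: mulr_ge0; lra.
  lra.
split.
- by apply: divr_ge0 => //; apply: mulr_ge0.
- apply: divr_ge0; last lra.
  have := g1 z; rewrite z0 z1 => /(_ isT) H.
  have -> : u - y - 2 * a * (y * u + u * z - y) = 2 * (u * (a * (2^-1 - z) + (1 - a) * (2^-1 - y)))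
         + y * (2 * a - 1) * (1 - 2 * u) by field.
  lra.
- apply: divr_ge0; last lra.
  have -> : u * (a * x + 4 * a * y + a * z - 2) + 2 * (a - 2 * a * y + y) =
    (1 - 2 * u) * (2 * a * (1 - 2 * y) + 2 * y) + 2 * u * (a * (x + z) / 2 + (2 * a - 1) + 2 * y * (1 - a)) by field.
  have h1 : 0 <= 2 * a * (1 - 2 * y) by apply: mulr_ge0; lra.
  have h2 : 0 <= (1 - 2 * u) * (2 * a * (1 - 2 * y) + 2 * y) by apply: mulr_ge0; lra.
  have h3 : 0 <= a * (x + z) / 2 by apply: divr_ge0; [apply: mulr_ge0|]; lra.
  have h4 : 0 <= 2 * y * (1 - a) by apply: mulr_ge0; [apply: mulr_ge0|]; lra.
  have h5 : 0 <= 2 * u * (a * (x + z) / 2 + (2 * a - 1) + 2 * y * (1 - a)) by apply: mulr_ge0; lra.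
  lra.
- apply: divr_ge0; last lra.
  have := g1 x; rewrite x0 x1 => /(_ isT) H.
  have -> : u - y - 2 * a * (x * u + y * u - y) = 2 * (u * (a * (2^-1 - x) + (1 - a) * (2^-1 - y)))
         + y * (2 * a - 1) * (1 - 2 * u) by field.
  lra.
- by apply: divr_ge0 => //; apply: mulr_ge0.
Qed.


Lemma bound (a : R) : a != 0 -> (a < 2^-1 \/ 1 < a) ->
  exists c : R, c < 2^-1 /\ forall d, good_deltas a d -> d <= c.
Proof.
move=> a0 [ha|ha]; last first.
  exists (2 * a)^-1; split.
    rewrite ltf_pV2 ?posrE; lra.
  move=> d [d0 H]; rewrite leNgt; apply/negP => hd.
  have := H 0 0 d d; rewrite !lexx d0 /= => /(_ isT isT isT isT) [_ + _ _ _].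
  have -> : Pm1 a 0 0 d d = - ((d * (2 * a * d - 1)) / (2 * a)) by rewrite /Pm1; field.
  rewrite oppr_ge0 leNgt => /negP; apply; apply: divr_gt0; last lra.
  have : 0 < (2 * a)^-1 by rewrite invr_gt0; lra.
  move=> hi; apply: mulr_gt0; first lra.
  have : 1 < 2 * a * d; last lra.
  by rewrite -ltr_pdivrMl; [rewrite mulr1 | lra].
exists 0; split; first lra.
move=> d [d0 H]; rewrite leNgt; apply/negP => hd.
have [an|ap] := ltP a 0.
  have := H 0 0 0 d; rewrite !lexx d0 /= => /(_ isT isT isT isT) [_ + _ _ _].
  have -> : Pm1 a 0 0 0 d = - (d / (- (2 * a))) by rewrite /Pm1; field.
  rewrite oppr_ge0 leNgt => /negP; apply; apply: divr_gt0; lra.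
have ap' : 0 < a by rewrite lt_neqAle eq_sym a0.
have := H 0 d 0 0; rewrite !lexx d0 /= => /(_ isT isT isT isT) [_ + _ _ _].
have -> : Pm1 a 0 d 0 0 = - ((d * (1 - 2 * a)) / (2 * a)) by rewrite /Pm1; field.
rewrite oppr_ge0 leNgt => /negP; apply; apply: divr_gt0; last lra.
apply: mulr_gt0; lra.
Qed.

End Aux.

Theorem proposition9 (R : realType) :
  (forall a : R, 2^-1 <= a <= 1 -> gamma a = 2^-1) /\
  (forall a : R, a != 0 -> (a < 2^-1 \/ 1 < a) -> gamma a < 2^-1).
Proof.
split.
  move=> a ha.
  have a0 : a != 0 by move: ha => /andP[h1 _]; apply/eqP; lra.
  have ub : ubound (good_deltas a) 2^-1.
    move=> d [d0 H]; apply: (@Pm1_neg R a d a0) => // x y z u hx hy hz hu.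
    by have [] := H x y z u hx hy hz hu.
  apply/eqP; rewrite eq_le; apply/andP; split.
    by apply: ge_sup => //; exists 0; exact: zero_good.
  apply: sup_upper_bound; last exact: half_good.
  by split; [exists 0; exact: zero_good | exists 2^-1].
move=> a a0 ha.
have [c [hc H]] := @bound R a a0 ha.
apply: le_lt_trans hc.
by apply: ge_sup => //; exists 0; exact: zero_good.
Qed.
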